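(* For every $\mu > 0$ there exists $n_0$ such that for every $n \geq n_0$ the following holds. Let $G$ be an $n$-vertex graph with minimum degree $\delta(G) \geq 7\mu n$ and independence number $\alpha(G) \leq 2$. Then either $G$ is $\mu$-inseparable, or there is a $\mu$-separation $\{U_1, U_2\}$ of $V(G)$ such that $G[U_1]$ and $G[U_2]$ are both $\mu$-inseparable.
   Context: For a graph $G$, a partition $\{U_1,U_2\}$ of $V(G)$ with $U_1, U_2$ nonempty is a $\mu$-separation if the number of edges of $G$ with one endpoint in $U_1$ and the other in $U_2$ is less than $\mu |U_1||U_2|$. A graph is $\mu$-inseparable if it has no $\mu$-separation. *)

(* Defs.v *)
From HB Require Import structures.
From mathcomp Require Import all_boot all_order all_algebra.
From mathcomp Require Import reals.
Set Implicit Arguments. Unset Strict Implicit. Unset Printing Implicit Defensive.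
Import Order.TTheory GRing.Theory Num.Theory.
Local Open Scope ring_scope.

(* A simple graph is a symmetric irreflexive relation e on a finite vertex type T. *)

(* number of edges of G with one endpoint in U1 and the other in U2
   (U1, U2 disjoint, so ordered pairs (x,y) with x in U1, y in U2 count each edge once) *)
Definition cross_edges (T : finType) (e : rel T) (U1 U2 : {set T}) : nat :=
  #|[set p : T * T | [&& p.1 \in U1, p.2 \in U2 & e p.1 p.2]]|.

(* {U1,U2} is a mu-separation of the vertex set W of the induced subgraph G[W]. *)
Definition mu_separation (R : realType) (T : finType) (e : rel T) (mu : R)
    (W U1 U2 : {set T}) : Prop :=
  [/\ U1 :|: U2 = W, U1 :&: U2 = set0, U1 != set0, U2 != set0 &
      (cross_edges e U1 U2)%:R < mu * (#|U1|)%:R * (#|U2|)%:R].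

Definition mu_inseparable (R : realType) (T : finType) (e : rel T) (mu : R)
    (W : {set T}) : Prop :=
  forall U1 U2 : {set T}, ~ mu_separation e mu W U1 U2.

Definition degree (T : finType) (e : rel T) (x : T) : nat := #|[set y | e x y]|.

Definition independent (T : finType) (e : rel T) (S : {set T}) : bool :=
  [forall x in S, forall y in S, ~~ e x y].

Definition indep_number_le (T : finType) (e : rel T) (k : nat) : Prop :=
  forall S : {set T}, independent e S -> (#|S| <= k)%N.

(* Main.v *)
Require Import Defs.
From HB Require Import structures.
From mathcomp Require Import all_boot all_order all_algebra.
From mathcomp Require Import reals lra zify.
From Stdlib Require Classical_Prop.
Set Implicit Arguments. Unset Strict Implicit.
Import Order.TTheory GRing.Theory Num.Theory.
Local Open Scope ring_scope.

Lemma sumb_card (T : finType) (P : pred T) : #|[set x | P x]| = (\sum_x (P x : nat))%N.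
Proof.
rewrite -sum1_card big_mkcond /=; apply: eq_bigr => x _.
by rewrite !inE; case: (P x).
Qed.

Lemma cross_sum (T : finType) (e : rel T) U V :
  cross_edges e U V = (\sum_(a in U) \sum_(b in V) e a b)%N.
Proof.
rewrite /cross_edges (@sumb_card _ (fun p : T * T => [&& p.1 \in U, p.2 \in V & e p.1 p.2])).
rewrite -(pair_big xpredT xpredT (fun a b => ([&& a \in U, b \in V & e a b] : nat))) /=.
rewrite [RHS]big_mkcond /=; apply: eq_bigr => a _.
case: (a \in U); last by rewrite big1.
rewrite [RHS]big_mkcond /=.
by apply: eq_bigr => b _; case: (b \in V).
Qed.

Lemma sum_setU (T : finType) (F : T -> nat) (U V : {set T}) :
  U :&: V = set0 -> (\sum_(i in U :|: V) F i = \sum_(i in U) F i + \sum_(i in V) F i)%N.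
Proof.
move=> h; rewrite -bigU /=; last by rewrite -setI_eq0 h.
by apply: eq_bigl => i; rewrite inE.
Qed.

Lemma cross_Ul (T : finType) (e : rel T) U V W : U :&: V = set0 ->
  cross_edges e (U :|: V) W = (cross_edges e U W + cross_edges e V W)%N.
Proof. by move=> h; rewrite !cross_sum sum_setU. Qed.

Lemma cross_Ur (T : finType) (e : rel T) U V W : V :&: W = set0 ->
  cross_edges e U (V :|: W) = (cross_edges e U V + cross_edges e U W)%N.
Proof.
by move=> h; rewrite !cross_sum -big_split /=; apply: eq_bigr => a _; rewrite sum_setU.
Qed.

Lemma cross_sym (T : finType) (e : rel T) U V : symmetric e ->
  cross_edges e U V = cross_edges e V U.
Proof.
move=> hs; rewrite !cross_sum exchange_big /=.
by apply: eq_bigr => a _; apply: eq_bigr => b _; rewrite hs.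
Qed.

Lemma sep_sym (R : realType) (T : finType) (e : rel T) (mu : R) W U1 U2 :
  symmetric e -> mu_separation e mu W U1 U2 -> mu_separation e mu W U2 U1.
Proof.
move=> hs [h1 h2 h3 h4 h5]; split => //; first by rewrite setUC.
  by rewrite setIC.
by rewrite cross_sym // mulrAC.
Qed.

Lemma triple_pt (T : finType) (e : rel T) a b c :
  symmetric e -> irreflexive e -> indep_number_le e 2 ->
  a != b -> a != c -> b != c -> (1 <= e a b + e a c + e b c)%N.
Proof.
move=> hs hi hind hab hac hbc.
case E1: (e a b); first by (simpl; lia).
case E2: (e a c); first by (simpl; lia).
case E3: (e b c); first by (simpl; lia).
have : (#|[set a; b; c]| <= 2)%N.
  apply: hind; apply/forallP => x; apply/implyP => hx; apply/forallP => y; apply/implyP => hy.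
  move: hx hy; rewrite !inE.
  move=> /orP[/orP[/eqP->|/eqP->]|/eqP->] /orP[/orP[/eqP->|/eqP->]|/eqP->];
    by rewrite ?hi ?E1 ?E2 ?E3 // hs ?E1 ?E2 ?E3.
by rewrite setUC cardsU1 cards2 !inE hab (eq_sym c a) (eq_sym c b) (negbTE hac) (negbTE hbc).
Qed.

Lemma sum3_split (T : finType) (U1 C D : {set T}) (f g h : T -> T -> T -> nat) :
  (\sum_(a in U1) \sum_(b in C) \sum_(c in D) (f a b c + g a b c + h a b c) =
   \sum_(a in U1) \sum_(b in C) \sum_(c in D) f a b c +
   \sum_(a in U1) \sum_(b in C) \sum_(c in D) g a b c +
   \sum_(a in U1) \sum_(b in C) \sum_(c in D) h a b c)%N.
Proof.
rewrite -!big_split; apply: eq_bigr => a _; rewrite -!big_split; apply: eq_bigr => b _.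
by rewrite -!big_split.
Qed.

Lemma triple (T : finType) (e : rel T) (U1 C D : {set T}) :
  symmetric e -> irreflexive e -> indep_number_le e 2 ->
  U1 :&: C = set0 -> U1 :&: D = set0 -> C :&: D = set0 ->
  (#|U1| * #|C| * #|D| <= cross_edges e U1 C * #|D| + cross_edges e U1 D * #|C|
      + cross_edges e C D * #|U1|)%N.
Proof.
move=> hs hi hind h1 h2 h3.
have -> : (#|U1| * #|C| * #|D| = \sum_(a in U1) \sum_(b in C) \sum_(c in D) 1)%N.
  rewrite (eq_bigr (fun _ => #|C| * #|D|)%N) ?sum_nat_const ?mulnA // => a _.
  by rewrite muln1.
have -> : (cross_edges e U1 C * #|D| = \sum_(a in U1) \sum_(b in C) \sum_(c in D) e a b)%N.
  rewrite cross_sum big_distrl /=; apply: eq_bigr => a _; rewrite big_distrl /=.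
  by apply: eq_bigr => b _; rewrite sum_nat_const mulnC.
have -> : (cross_edges e U1 D * #|C| = \sum_(a in U1) \sum_(b in C) \sum_(c in D) e a c)%N.
  rewrite cross_sum big_distrl /=; apply: eq_bigr => a _.
  by rewrite sum_nat_const mulnC.
have -> : (cross_edges e C D * #|U1| = \sum_(a in U1) \sum_(b in C) \sum_(c in D) e b c)%N.
  by rewrite sum_nat_const mulnC cross_sum.
rewrite -sum3_split.
apply: leq_sum => a ha; apply: leq_sum => b hb; apply: leq_sum => c hc.
apply: triple_pt => //.
- by apply/eqP => ab; subst b; move: h1 => /setP/(_ a); rewrite !inE ha hb.
- by apply/eqP => ac; subst c; move: h2 => /setP/(_ a); rewrite !inE ha hc.
- by apply/eqP => bc; subst c; move: h3 => /setP/(_ b); rewrite !inE hb hc.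
Qed.

Lemma deg_bound (T : finType) (e : rel T) (U1 U2 : {set T}) v :
  U1 :|: U2 = setT -> U1 :&: U2 = set0 ->
  (degree e v <= #|U1| + \sum_(y in U2) e v y)%N.
Proof.
move=> hU hI; rewrite /degree sumb_card.
have -> : (\sum_y e v y = \sum_(y in U1 :|: U2) e v y)%N.
  by rewrite hU; apply: eq_bigl => y; rewrite inE.
rewrite sum_setU // leq_add2r -sum1_card.
by apply: leq_sum => y _; apply: leq_b1.
Qed.

Lemma side_large (R : realType) (T : finType) (e : rel T) (mu : R) (n : nat) U1 U2 :
  0 < mu -> #|T| = n -> (forall x : T, 7%:R * mu * n%:R <= (degree e x)%:R) ->
  mu_separation e mu [set: T] U1 U2 -> 6%:R * mu * n%:R < (#|U1|)%:R.
Proof.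
move=> hmu hn hdeg [hU hI h1 h2 hc].
have hsum : (\sum_(v in U1) degree e v <= #|U1| * #|U1| + cross_edges e U1 U2)%N.
  rewrite cross_sum -sum_nat_const -big_split /=.
  by apply: leq_sum => v _; apply: deg_bound.
have hsumR : (#|U1|)%:R * (7%:R * mu * n%:R) <= (#|U1|)%:R * (#|U1|)%:R + (cross_edges e U1 U2)%:R :> R.
  rewrite -natrM -natrD; apply: le_trans (_ : (\sum_(v in U1) degree e v)%:R <= _); last first.
    by rewrite ler_nat.
  rewrite natr_sum (mulr_natl (7%:R * mu * n%:R) #|U1|) -sumr_const.
  by apply: ler_sum => v _; apply: hdeg.
have hp2 : (#|U2|)%:R <= n%:R :> R by rewrite ler_nat -hn max_card.
have hp1 : 0 < (#|U1|)%:R :> R by rewrite ltr0n card_gt0.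
have : (cross_edges e U1 U2)%:R < mu * (#|U1|)%:R * n%:R.
  apply: lt_le_trans hc _; rewrite ler_wpM2l // mulr_ge0 // ltW //.
nra.
Qed.
Lemma core1 (R : realFieldType) (mu p1 p2 p3 x y z : R) :
  0 < mu -> 7 * mu <= 1 -> 0 <= p1 -> 0 <= p2 -> 0 <= p3 ->
  x + y < mu * p1 * (p2 + p3) -> z < mu * p2 * p3 -> 3 * p1 * p2 <= 7 * x ->
  y + z < mu * (p1 + p2) * p3.
Proof.
move=> ? ? ? ? ? ? ? ?.
have hp : 0 <= p1 * p2 by rewrite mulr_ge0.
have : mu * (p1 * p2) <= 3 * (p1 * p2) / 7 by nra.
nra.
Qed.

Lemma core2 (R : realFieldType) (mu p1 p2 p3 x z n : R) :
  0 < mu -> 0 <= p2 -> 0 <= p3 -> 6 * mu * n < p1 -> p3 <= n ->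
  z < mu * p2 * p3 -> 3 * p1 * p2 <= 7 * x -> z < x.
Proof.
move=> ? ? ? ? ? ? ?.
have : mu * p3 <= 3 * p1 / 7 by nra.
move=> h; have : mu * p3 * p2 <= 3 * p1 / 7 * p2 by rewrite ler_wpM2r.
nra.
Qed.

Lemma core3 (R : realFieldType) (mu p1 p2 p3 x y z : R) :
  7 * mu <= 1 -> 0 < p1 -> 0 < p2 -> 0 < p3 ->
  p1 * p2 * p3 <= x * p3 + y * p2 + z * p1 ->
  z < mu * p2 * p3 -> 7 * x < 3 * p1 * p2 -> 7 * y < 3 * p1 * p3 -> False.
Proof.
move=> ? ? ? ? ? ? ? ?.
have : 0 < p1 * p2 * p3 by rewrite !mulr_gt0.
have h23 : 0 < p2 * p3 by rewrite mulr_gt0.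
have : 7 * z < p2 * p3 by nra.
move=> h; have : 7 * z * p1 < p2 * p3 * p1 by rewrite ltr_pM2r.
have : 7 * x * p3 < 3 * p1 * p2 * p3 by rewrite ltr_pM2r.
have : 7 * y * p2 < 3 * p1 * p3 * p2 by rewrite ltr_pM2r.
nra.
Qed.

Lemma mu_small (R : realType) (T : finType) (e : rel T) (mu : R) (n : nat) (v : T) :
  0 < mu -> #|T| = n -> (forall x : T, 7%:R * mu * n%:R <= (degree e x)%:R) ->
  7%:R * mu <= 1.
Proof.
move=> hmu hn hdeg.
have hn0 : 0 < n%:R :> R by rewrite ltr0n -hn; apply/card_gt0P; exists v.
have : (degree e v)%:R <= n%:R :> R by rewrite ler_nat -hn max_card.
move: (hdeg v) => h1 h2.
have : 7%:R * mu * n%:R <= 1 * n%:R by rewrite mul1r; apply: le_trans h1 h2.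
by rewrite ler_pM2r.
Qed.

Lemma build (R : realType) (T : finType) (e : rel T) (mu : R) (n : nat) (U1 U2 C D : {set T}) :
  0 < mu -> 7%:R * mu <= 1 -> #|T| = n ->
  6%:R * mu * n%:R < (#|U1|)%:R ->
  mu_separation e mu [set: T] U1 U2 ->
  C :|: D = U2 -> C :&: D = set0 -> C != set0 -> D != set0 ->
  (cross_edges e C D)%:R < mu * (#|C|)%:R * (#|D|)%:R ->
  3%:R * (#|U1|)%:R * (#|C|)%:R <= 7%:R * (cross_edges e U1 C)%:R :> R ->
  exists V1 V2, mu_separation e mu [set: T] V1 V2 /\
     (cross_edges e V1 V2 < cross_edges e U1 U2)%N.
Proof.
move=> hmu hmu7 hn hp1 [hU hI hU1 hU2 hc] hCD hCDI hC hD hz hx.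
have hU1C : U1 :&: C = set0.
  by apply/setP => v; move/setP: hI => /(_ v); rewrite -hCD !inE; case: (v \in U1); case: (v \in C).
have hU1D : U1 :&: D = set0.
  by apply/setP => v; move/setP: hI => /(_ v); rewrite -hCD !inE; case: (v \in U1); case: (v \in C); case: (v \in D).
have hcr : cross_edges e U1 U2 = (cross_edges e U1 C + cross_edges e U1 D)%N.
  by rewrite -hCD cross_Ur.
have hcard2 : #|U2| = (#|C| + #|D|)%N by rewrite -hCD cardsU hCDI cards0 subn0.
have hcard1 : #|U1 :|: C| = (#|U1| + #|C|)%N by rewrite cardsU hU1C cards0 subn0.
have hp3 : (#|D|)%:R <= n%:R :> R by rewrite ler_nat -hn max_card.
move: hc; rewrite hcr hcard2 !natrD => hc.
have hzx : (cross_edges e C D)%:R < (cross_edges e U1 C)%:R :> R.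
  apply: (@core2 R mu (#|U1|)%:R (#|C|)%:R (#|D|)%:R _ _ n%:R) => //.
exists (U1 :|: C), D; split; last first.
  by rewrite cross_Ul // addnC ltn_add2r -(ltr_nat R).
split.
- by rewrite -setUA hCD.
- apply/setP => v; move/setP: hU1D => /(_ v); move/setP: hCDI => /(_ v).
  by rewrite !inE; case: (v \in U1); case: (v \in C); case: (v \in D).
- by rewrite setU_eq0 negb_and hU1.
- done.
rewrite cross_Ul // hcard1 !natrD.
apply: (@core1 R mu _ _ _ (cross_edges e U1 C)%:R) => //.
Qed.

Lemma not_insep (R : realType) (T : finType) (e : rel T) (mu : R) W :
  ~ mu_inseparable e mu W -> exists C D, mu_separation e mu W C D.
Proof.
move=> h; apply: Classical_Prop.NNPP => H; apply: h => C D hs; apply: H; by exists C, D.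
Qed.

Lemma improve (R : realType) (T : finType) (e : rel T) (mu : R) (n : nat)
    (U1 U2 C D : {set T}) :
  symmetric e -> irreflexive e -> indep_number_le e 2 ->
  0 < mu -> #|T| = n -> (forall x : T, 7%:R * mu * n%:R <= (degree e x)%:R) ->
  mu_separation e mu [set: T] U1 U2 -> mu_separation e mu U2 C D ->
  exists V1 V2, mu_separation e mu [set: T] V1 V2 /\
     (cross_edges e V1 V2 < cross_edges e U1 U2)%N.
Proof.
move=> hs hi hind hmu hn hdeg sepG sepC.
have sepG' := sepG; case: sepG' => hU hI hU1 hU2 hc.
have sepC' := sepC; case: sepC' => hCD hCDI hC hD hz.
have [v _] := set0Pn _ hU1.
have hmu7 := mu_small v hmu hn hdeg.
have hp1 := side_large hmu hn hdeg sepG.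
have hU1C : U1 :&: C = set0.
  by apply/setP => w; move/setP: hI => /(_ w); rewrite -hCD !inE; case: (w \in U1); case: (w \in C).
have hU1D : U1 :&: D = set0.
  by apply/setP => w; move/setP: hI => /(_ w); rewrite -hCD !inE; case: (w \in U1); case: (w \in C); case: (w \in D).
have ht := triple hs hi hind hU1C hU1D hCDI.
have htR : (#|U1|)%:R * (#|C|)%:R * (#|D|)%:R <=
    (cross_edges e U1 C)%:R * (#|D|)%:R + (cross_edges e U1 D)%:R * (#|C|)%:R
      + (cross_edges e C D)%:R * (#|U1|)%:R :> R.
  by rewrite -!natrM -!natrD ler_nat.
case: (lerP (3%:R * (#|U1|)%:R * (#|C|)%:R) (7%:R * (cross_edges e U1 C)%:R :> R)) => hx.
  exact: (build hmu hmu7 hn hp1 sepG hCD hCDI hC hD hz hx).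
case: (lerP (3%:R * (#|U1|)%:R * (#|D|)%:R) (7%:R * (cross_edges e U1 D)%:R :> R)) => hy.
  apply: (build hmu hmu7 hn hp1 sepG _ _ hD hC _ hy).
  - by rewrite setUC.
  - by rewrite setIC.
  - by rewrite cross_sym // mulrAC.
exfalso.
have p1g : 0 < (#|U1|)%:R :> R by rewrite ltr0n card_gt0.
have p2g : 0 < (#|C|)%:R :> R by rewrite ltr0n card_gt0.
have p3g : 0 < (#|D|)%:R :> R by rewrite ltr0n card_gt0.
exact: (core3 hmu7 p1g p2g p3g htR hz hx hy).
Qed.

Theorem lemma7p3 (R : realType) (mu : R) (hmu : 0 < mu) :
  exists n0 : nat, forall n : nat, (n0 <= n)%N ->
  forall (T : finType) (e : rel T),
    symmetric e -> irreflexive e -> #|T| = n ->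
    (forall x : T, 7%:R * mu * n%:R <= (degree e x)%:R) ->
    indep_number_le e 2 ->
    mu_inseparable e mu [set: T] \/
    exists U1 U2 : {set T},
      [/\ mu_separation e mu [set: T] U1 U2,
          mu_inseparable e mu U1 & mu_inseparable e mu U2].
Proof.
exists 0%N => n _ T e hs hi hn hdeg hind.
case: (Classical_Prop.classic (mu_inseparable e mu [set: T])) => [h|h]; first by left.
right; have [U1 [U2 hsep]] := not_insep h.
suff key : forall k (U1 U2 : {set T}), (cross_edges e U1 U2 < k)%N ->
    mu_separation e mu [set: T] U1 U2 ->
    exists U1 U2 : {set T},
      [/\ mu_separation e mu [set: T] U1 U2,
          mu_inseparable e mu U1 & mu_inseparable e mu U2].
  exact: (key (cross_edges e U1 U2).+1 U1 U2 (ltnSn _) hsep).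
elim=> [|k IH] V1 V2 hk hV; first by rewrite ltn0 in hk.
case: (Classical_Prop.classic (mu_inseparable e mu V2)) => h2.
  case: (Classical_Prop.classic (mu_inseparable e mu V1)) => h1.
    by exists V1, V2.
  have [C [D hCD]] := not_insep h1.
  have [W1 [W2 [hW hlt]]] := improve hs hi hind hmu hn hdeg (sep_sym hs hV) hCD.
  apply: (IH W1 W2) => //.
  rewrite (cross_sym V2 V1) // in hlt; apply: leq_trans hlt _; by rewrite -ltnS.
have [C [D hCD]] := not_insep h2.
have [W1 [W2 [hW hlt]]] := improve hs hi hind hmu hn hdeg hV hCD.
apply: (IH W1 W2) => //.
apply: leq_trans hlt _; by rewrite -ltnS.
Qed.
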